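(* Under the standing assumptions for the $M=1$ system (see context), the following identities hold for all $s>0$: (i) $\xi_1=\eta_0-e_1$; (ii) $x_0y_0+x_1y_1=0$; (iii) $\eta_1+\xi_0=e_2$; (iv) $s\,x_0y_1=-\eta_0\xi_1+\eta_0+\xi_0-\eta_1-e_2$; (v) $\eta_0x_0y_0+(\eta_1-\xi_0-s)x_0y_1+x_1y_0-\xi_1x_1y_1+\eta_0=0$.
   Context: Fix complex parameters $\nu_0,\nu_1$ and put $e_1=\nu_0+\nu_1$, $e_2=\nu_0\nu_1$. Let $x_0,x_1,y_0,y_1,\xi_0,\xi_1,\eta_0,\eta_1$ be smooth complex-valued functions of $s\in(0,\infty)$ satisfying, with $'=d/ds$, the system $s x_0'=-\eta_0x_0-x_1$, $s x_1'=-\eta_1x_0+sx_0+\xi_0x_0+\xi_1x_1$, $s y_1'=-\xi_1y_1+y_0$, $s y_0'=-\xi_0y_1-sy_1+\eta_0y_0+\eta_1y_1$, $\xi_0'=x_0y_0$, $\xi_1'=x_0y_1$, $\eta_0'=x_0y_1$, $\eta_1'=x_1y_1$, together with the boundary behaviour as $s\to0^+$: $\xi_0\to e_2$, $\xi_1\to-e_1$, $\eta_0\to0$, $\eta_1\to0$, and $x_j(s)y_k(s)\to0$ for all $j,k\in\{0,1\}$. (These are the variables of Strahov's Hamiltonian system describing the gap probability of the $M=1$ hard-edge kernel on $(0,s)$, with Hamiltonian $H=-\eta_0x_0y_0+(\xi_0-\eta_1+s)x_0y_1-x_1y_0+\xi_1x_1y_1$ and gap probability $\exp\int_0^s\eta_0(t)\,dt/t$.)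 *)

(* Defs.v *)
From Stdlib Require Export Reals.
Open Scope R_scope.

(* Complex numbers as (real part, imaginary part). *)
Definition Cpx : Type := (R * R)%type.
Definition Cadd (z w : Cpx) : Cpx := (fst z + fst w, snd z + snd w).
Definition Copp (z : Cpx) : Cpx := (- fst z, - snd z).
Definition Csub (z w : Cpx) : Cpx := Cadd z (Copp w).
Definition Cmul (z w : Cpx) : Cpx :=
  (fst z * fst w - snd z * snd w, fst z * snd w + snd z * fst w).
Definition CofR (r : R) : Cpx := (r, 0).
Definition C0 : Cpx := (0, 0).

Infix "+c" := Cadd (at level 50, left associativity).
Infix "-c" := Csub (at level 50, left associativity).
Infix "*c" := Cmul (at level 40, left associativity).
Notation "-c z" := (Copp z) (at level 35, right associativity).

Definition Cderiv (f : R -> Cpx) (s : R) (d : Cpx) : Prop :=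
  derivable_pt_lim (fun t => fst (f t)) s (fst d) /\
  derivable_pt_lim (fun t => snd (f t)) s (snd d).

Definition Clim0 (f : R -> Cpx) (l : Cpx) : Prop :=
  forall eps, 0 < eps -> exists delta, 0 < delta /\
    forall s, 0 < s < delta ->
      Rabs (fst (f s) - fst l) < eps /\ Rabs (snd (f s) - snd l) < eps.

(* Main.v *)
Require Import Defs.
From Stdlib Require Import Reals Lra.
Open Scope R_scope.

Lemma real_const (g : R -> R) (l : R) :
  (forall t, 0 < t -> derivable_pt_lim g t 0) ->
  (forall eps, 0 < eps -> exists delta, 0 < delta /\
    forall t, 0 < t < delta -> Rabs (g t - l) < eps) ->
  forall s, 0 < s -> g s = l.
Proof.
  intros Hd Hl s hs.
  assert (Hall : forall eps, 0 < eps -> Rabs (g s - l) < eps).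
  { intros eps he. destruct (Hl eps he) as [delta [hd H]].
    set (t := Rmin (delta/2) s).
    assert (ht0 : 0 < t) by (unfold t; apply Rmin_glb_lt; lra).
    assert (ht1 : t < delta) by (unfold t; pose proof (Rmin_l (delta/2) s); lra).
    assert (ht2 : t <= s) by (unfold t; apply Rmin_r).
    assert (Hgt : g t = g s).
    { destruct (Rle_lt_or_eq_dec _ _ ht2) as [hlt|heq]; [|now rewrite heq].
      destruct (MVT_cor2 g (fun _ => 0) t s hlt) as [c [Hc _]].
      - intros c hc. apply Hd. lra.
      - lra. }
    rewrite <- Hgt. apply H. lra. }
  destruct (Req_dec (g s - l) 0) as [h|h]; [lra|].
  pose proof (Rabs_pos_lt _ h). specialize (Hall _ H). lra.
Qed.

Lemma Cext (z w : Cpx) : fst z = fst w -> snd z = snd w -> z = w.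
Proof. destruct z, w; simpl; intros; subst; reflexivity. Qed.

Lemma C_const (F : R -> Cpx) (L : Cpx) :
  (forall t, 0 < t -> Cderiv F t C0) -> Clim0 F L ->
  forall s, 0 < s -> F s = L.
Proof.
  intros Hd Hl s hs. apply Cext.
  - apply (real_const (fun t => fst (F t))); auto.
    + intros t ht. apply (Hd t ht).
    + intros eps he. destruct (Hl eps he) as [d [hd H]]. exists d; split; auto.
      intros t ht; apply (H t ht).
  - apply (real_const (fun t => snd (F t))); auto.
    + intros t ht. apply (Hd t ht).
    + intros eps he. destruct (Hl eps he) as [d [hd H]]. exists d; split; auto.
      intros t ht; apply (H t ht).
Qed.

Lemma Cd_eq f s d d' : Cderiv f s d -> d = d' -> Cderiv f s d'.
Proof. intros H ->; exact H. Qed.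

Lemma dl_eq f s d d' : derivable_pt_lim f s d -> d = d' -> derivable_pt_lim f s d'.
Proof. intros H ->; exact H. Qed.

Lemma Cd_add f g s df dg : Cderiv f s df -> Cderiv g s dg ->
  Cderiv (fun t => f t +c g t) s (df +c dg).
Proof.
  intros [A B] [C D]; split.
  - exact (derivable_pt_lim_plus _ _ _ _ _ A C).
  - exact (derivable_pt_lim_plus _ _ _ _ _ B D).
Qed.

Lemma Cd_opp f s df : Cderiv f s df -> Cderiv (fun t => -c f t) s (-c df).
Proof.
  intros [A B]; split.
  - exact (derivable_pt_lim_opp _ _ _ A).
  - exact (derivable_pt_lim_opp _ _ _ B).
Qed.

Lemma Cd_sub f g s df dg : Cderiv f s df -> Cderiv g s dg ->
  Cderiv (fun t => f t -c g t) s (df -c dg).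
Proof. intros A B. apply Cd_add; auto. apply Cd_opp; auto. Qed.

Lemma Cd_mul f g s df dg : Cderiv f s df -> Cderiv g s dg ->
  Cderiv (fun t => f t *c g t) s (df *c g s +c f s *c dg).
Proof.
  intros [A B] [C D]; split.
  - eapply dl_eq.
    + exact (derivable_pt_lim_minus _ _ _ _ _ (derivable_pt_lim_mult _ _ _ _ _ A C)
                                    (derivable_pt_lim_mult _ _ _ _ _ B D)).
    + simpl; ring.
  - eapply dl_eq.
    + exact (derivable_pt_lim_plus _ _ _ _ _ (derivable_pt_lim_mult _ _ _ _ _ A D)
                                    (derivable_pt_lim_mult _ _ _ _ _ B C)).
    + simpl; ring.
Qed.

Lemma Cd_const (c : Cpx) s : Cderiv (fun _ => c) s C0.
Proof. split; apply derivable_pt_lim_const. Qed.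

Lemma Cd_id s : Cderiv (fun t => CofR t) s (1, 0).
Proof. split; [apply derivable_pt_lim_id | apply derivable_pt_lim_const]. Qed.

Definition lim1 (g : R -> R) l := limit1_in g (fun x => 0 < x) l 0.

Lemma Clim_split F L : Clim0 F L <-> lim1 (fun t => fst (F t)) (fst L) /\ lim1 (fun t => snd (F t)) (snd L).
Proof.
  unfold lim1, limit1_in, limit_in; simpl; unfold Rdist; split.
  - intros H; split; intros eps he; destruct (H eps he) as [d [hd Hd]];
      exists d; split; auto; intros x [hx1 hx2]; rewrite Rminus_0_r, Rabs_pos_eq in hx2 by lra;
      apply Hd; lra.
  - intros [H1 H2] eps he. destruct (H1 eps he) as [d1 [hd1 Hd1]].
    destruct (H2 eps he) as [d2 [hd2 Hd2]].
    exists (Rmin d1 d2); split; [apply Rmin_glb_lt; lra|].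
    intros s hs. pose proof (Rmin_l d1 d2); pose proof (Rmin_r d1 d2).
    split; [apply Hd1 | apply Hd2]; rewrite Rminus_0_r, Rabs_pos_eq; lra.
Qed.

Lemma Cl_add f g l m : Clim0 f l -> Clim0 g m -> Clim0 (fun t => f t +c g t) (l +c m).
Proof.
  rewrite !Clim_split; intros [A B] [C D]; split.
  - exact (limit_plus _ _ _ _ _ _ A C).
  - exact (limit_plus _ _ _ _ _ _ B D).
Qed.

Lemma Cl_opp f l : Clim0 f l -> Clim0 (fun t => -c f t) (-c l).
Proof.
  rewrite !Clim_split; intros [A B]; split.
  - exact (limit_Ropp _ _ _ _ A).
  - exact (limit_Ropp _ _ _ _ B).
Qed.

Lemma Cl_sub f g l m : Clim0 f l -> Clim0 g m -> Clim0 (fun t => f t -c g t) (l -c m).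
Proof. intros; apply Cl_add; auto; apply Cl_opp; auto. Qed.

Lemma Cl_mul f g l m : Clim0 f l -> Clim0 g m -> Clim0 (fun t => f t *c g t) (l *c m).
Proof.
  rewrite !Clim_split; intros [A B] [C D]; split.
  - exact (limit_minus _ _ _ _ _ _ (limit_mul _ _ _ _ _ _ A C) (limit_mul _ _ _ _ _ _ B D)).
  - exact (limit_plus _ _ _ _ _ _ (limit_mul _ _ _ _ _ _ A D) (limit_mul _ _ _ _ _ _ B C)).
Qed.

Lemma Cl_const (c : Cpx) : Clim0 (fun _ => c) c.
Proof. intros eps he; exists 1; split; [lra|]; intros; rewrite !Rminus_diag, !Rabs_R0; lra. Qed.

Lemma Cl_id : Clim0 (fun t => CofR t) C0.
Proof.
  intros eps he; exists eps; split; auto; intros s hs; simpl.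
  rewrite !Rminus_0_r, Rabs_R0, Rabs_pos_eq; lra.
Qed.

Lemma solve_d s d r : 0 < s -> CofR s *c d = r -> d = CofR (/ s) *c r.
Proof.
  intros hs <-. destruct d; unfold Cmul, CofR; simpl; f_equal; field; lra.
Qed.

Ltac dtac :=
  match goal with
  | |- Cderiv (fun t => @?f t +c @?g t) _ _ => eapply Cd_add
  | |- Cderiv (fun t => @?f t -c @?g t) _ _ => eapply Cd_sub
  | |- Cderiv (fun t => -c @?f t) _ _ => eapply Cd_opp
  | |- Cderiv (fun t => @?f t *c @?g t) _ _ => eapply Cd_mul
  | |- Cderiv (fun t => CofR t) _ _ => apply Cd_id
  | |- Cderiv CofR _ _ => apply Cd_id
  | |- Cderiv (fun _ => ?c) _ _ => apply Cd_const
  | |- _ => eassumption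
  end.

Ltac ltac_ :=
  match goal with
  | |- _ => eassumption
  | |- Clim0 (fun t => @?f t +c @?g t) _ => eapply Cl_add
  | |- Clim0 (fun t => @?f t -c @?g t) _ => eapply Cl_sub
  | |- Clim0 (fun t => -c @?f t) _ => eapply Cl_opp
  | |- Clim0 (fun t => @?f t *c @?g t) _ => eapply Cl_mul
  | |- Clim0 (fun t => CofR t) _ => apply Cl_id
  | |- Clim0 CofR _ => apply Cl_id
  | |- Clim0 (fun _ => ?c) _ => apply Cl_const
  end.
Theorem mainTheorem1
  (nu0 nu1 : Cpx)
  (x0 x1 y0 y1 xi0 xi1 eta0 eta1 : R -> Cpx)
  (Hx0 : forall s, 0 < s -> exists d, Cderiv x0 s d /\
     CofR s *c d = (-c (eta0 s *c x0 s)) -c x1 s)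
  (Hx1 : forall s, 0 < s -> exists d, Cderiv x1 s d /\
     CofR s *c d = (-c (eta1 s *c x0 s)) +c CofR s *c x0 s +c xi0 s *c x0 s
                   +c xi1 s *c x1 s)
  (Hy1 : forall s, 0 < s -> exists d, Cderiv y1 s d /\
     CofR s *c d = (-c (xi1 s *c y1 s)) +c y0 s)
  (Hy0 : forall s, 0 < s -> exists d, Cderiv y0 s d /\
     CofR s *c d = (-c (xi0 s *c y1 s)) -c CofR s *c y1 s +c eta0 s *c y0 s
                   +c eta1 s *c y1 s)
  (Hxi0 : forall s, 0 < s -> Cderiv xi0 s (x0 s *c y0 s))
  (Hxi1 : forall s, 0 < s -> Cderiv xi1 s (x0 s *c y1 s))
  (Heta0 : forall s, 0 < s -> Cderiv eta0 s (x0 s *c y1 s))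
  (Heta1 : forall s, 0 < s -> Cderiv eta1 s (x1 s *c y1 s))
  (Bxi0 : Clim0 xi0 (nu0 *c nu1))
  (Bxi1 : Clim0 xi1 (-c (nu0 +c nu1)))
  (Beta0 : Clim0 eta0 C0)
  (Beta1 : Clim0 eta1 C0)
  (B00 : Clim0 (fun s => x0 s *c y0 s) C0)
  (B01 : Clim0 (fun s => x0 s *c y1 s) C0)
  (B10 : Clim0 (fun s => x1 s *c y0 s) C0)
  (B11 : Clim0 (fun s => x1 s *c y1 s) C0) :
  let e1 := nu0 +c nu1 in
  let e2 := nu0 *c nu1 in
  forall s, 0 < s ->
    xi1 s = eta0 s -c e1 /\
    x0 s *c y0 s +c x1 s *c y1 s = C0 /\
    eta1 s +c xi0 s = e2 /\
    CofR s *c (x0 s *c y1 s) =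
      (-c (eta0 s *c xi1 s)) +c eta0 s +c xi0 s -c eta1 s -c e2 /\
    eta0 s *c x0 s *c y0 s +c (eta1 s -c xi0 s -c CofR s) *c x0 s *c y1 s
      +c x1 s *c y0 s -c xi1 s *c x1 s *c y1 s +c eta0 s = C0.
Proof.
  intros e1 e2.
  Ltac prep t ht Hx0 Hx1 Hy0 Hy1 Hxi0 Hxi1 Heta0 Heta1 :=
    let d0 := fresh in let d1 := fresh in let d2 := fresh in let d3 := fresh in
    let D0 := fresh in let D1 := fresh in let D2 := fresh in let D3 := fresh in
    let E0 := fresh in let E1 := fresh in let E2 := fresh in let E3 := fresh in
    destruct (Hx0 t ht) as [d0 [D0 E0]]; apply solve_d in E0; [|exact ht];
    destruct (Hx1 t ht) as [d1 [D1 E1]]; apply solve_d in E1; [|exact ht];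
    destruct (Hy0 t ht) as [d2 [D2 E2]]; apply solve_d in E2; [|exact ht];
    destruct (Hy1 t ht) as [d3 [D3 E3]]; apply solve_d in E3; [|exact ht];
    subst d0 d1 d2 d3;
    pose proof (Hxi0 t ht); pose proof (Hxi1 t ht);
    pose proof (Heta0 t ht); pose proof (Heta1 t ht).
  assert (Hi : forall t, 0 < t -> xi1 t -c eta0 t = (-c (nu0 +c nu1)) -c C0).
  { apply (C_const (fun t => xi1 t -c eta0 t)); [|repeat ltac_].
    intros t ht; prep t ht Hx0 Hx1 Hy0 Hy1 Hxi0 Hxi1 Heta0 Heta1.
    eapply Cd_eq; [repeat dtac|]. apply Cext; simpl; field; lra. }
  assert (Hii : forall t, 0 < t -> x0 t *c y0 t +c x1 t *c y1 t = C0 +c C0).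
  { apply (C_const (fun t => x0 t *c y0 t +c x1 t *c y1 t)); [|repeat ltac_].
    intros t ht; prep t ht Hx0 Hx1 Hy0 Hy1 Hxi0 Hxi1 Heta0 Heta1.
    eapply Cd_eq; [repeat dtac|]. apply Cext; simpl; field; lra. }
  assert (Hiii : forall t, 0 < t -> eta1 t +c xi0 t = C0 +c nu0 *c nu1).
  { apply (C_const (fun t => eta1 t +c xi0 t)); [|repeat ltac_].
    intros t ht; prep t ht Hx0 Hx1 Hy0 Hy1 Hxi0 Hxi1 Heta0 Heta1.
    pose proof (Hii t ht) as HH2.
    pose proof (f_equal fst HH2) as HH3; pose proof (f_equal snd HH2) as HH4; simpl in HH3, HH4.
    eapply Cd_eq; [repeat dtac|]. apply Cext; simpl; lra. }
  assert (Hiv : forall t, 0 < t -> CofR t *c (x0 t *c y1 t) -c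
      ((-c (eta0 t *c xi1 t)) +c eta0 t +c xi0 t -c eta1 t -c nu0 *c nu1) =
      C0 *c C0 -c ((-c (C0 *c (-c (nu0 +c nu1)))) +c C0 +c nu0 *c nu1 -c C0 -c nu0 *c nu1)).
  { apply (C_const (fun t => CofR t *c (x0 t *c y1 t) -c
      ((-c (eta0 t *c xi1 t)) +c eta0 t +c xi0 t -c eta1 t -c nu0 *c nu1))); [|repeat ltac_].
    intros t ht; prep t ht Hx0 Hx1 Hy0 Hy1 Hxi0 Hxi1 Heta0 Heta1.
    eapply Cd_eq; [repeat dtac|]. apply Cext; simpl; field; lra. }
  assert (Hv : forall t, 0 < t ->
     eta0 t *c (x0 t *c y0 t) +c (eta1 t -c xi0 t -c CofR t) *c (x0 t *c y1 t)
      +c x1 t *c y0 t -c xi1 t *c (x1 t *c y1 t) +c eta0 t =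
     C0 *c C0 +c (C0 -c nu0 *c nu1 -c C0) *c C0 +c C0 -c (-c (nu0 +c nu1)) *c C0 +c C0).
  { apply (C_const (fun t => eta0 t *c (x0 t *c y0 t) +c (eta1 t -c xi0 t -c CofR t) *c (x0 t *c y1 t)
      +c x1 t *c y0 t -c xi1 t *c (x1 t *c y1 t) +c eta0 t)); [|repeat ltac_].
    intros t ht; prep t ht Hx0 Hx1 Hy0 Hy1 Hxi0 Hxi1 Heta0 Heta1.
    eapply Cd_eq; [repeat dtac|]. apply Cext; simpl; field; lra. }
  intros s hs.
  pose proof (Hi s hs) as A; pose proof (Hii s hs) as B; pose proof (Hiii s hs) as C;
  pose proof (Hiv s hs) as D; pose proof (Hv s hs) as E.
  apply (f_equal fst) in A as A1; apply (f_equal snd) in A as A2;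
  apply (f_equal fst) in B as B1; apply (f_equal snd) in B as B2;
  apply (f_equal fst) in C as C1; apply (f_equal snd) in C as C2;
  apply (f_equal fst) in D as D1; apply (f_equal snd) in D as D2;
  apply (f_equal fst) in E as E1'; apply (f_equal snd) in E as E2';
  simpl in *.
  subst e1 e2.
  repeat split; apply Cext; simpl; lra.
Qed.
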